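(* Let $m,n\ge1$ and let $\lambda\subseteq\nu\subseteq(n-1)^{m-1}$ be partitions. Then $\mathrm{PASM}(\nu/\lambda,m,n)$ is a face of $\mathrm{PASM}(m,n)$, of dimension $|\nu|-|\lambda|$.
   Context: A partition $\mu=(\mu_1\ge\mu_2\ge\cdots)$ is a weakly decreasing sequence of nonnegative integers with finitely many nonzero terms, $|\mu|=\sum_i\mu_i$, and $\ell(\mu)$ is its number of positive parts. We write $\mu\subseteq\nu$ if $\mu_i\le\nu_i$ for all $i$, and $\mu\subseteq a^b$ if $\ell(\mu)\le b$ and $\mu_1\le a$. An $m\times n$ partial alternating sign matrix is an $m\times n$ matrix $M$ with entries in $\{-1,0,1\}$ such that $\sum_{i'=1}^{i}M_{i'j}\in\{0,1\}$ and $\sum_{j'=1}^{j}M_{ij'}\in\{0,1\}$ for all $i,j$; $\mathrm{PASM}(m,n)$ is the convex hull in $\mathbb{R}^{mn}$ of all $m\times n$ partial alternating sign matrices. For $\mu\subseteq(n-1)^{m-1}$, the $m\times n$ matrix $M^\mu$ has entries $M^\mu_{1,\mu_1+1}=1$; for each $1\le k\le m-1$ with $\mu_k>\mu_{k+1}$, $M^\mu_{k+1,\mu_{k+1}+1}=1$ and $M^\mu_{k+1,\mu_k+1}=-1$; all other entries $0$. $\mathrm{PASM}(\nu/\lambda,m,n)$ is the convex hull in $\mathbb{R}^{mn}$ of $\{M^\mu:\lambda\subseteq\mu\subseteq\nu\}$. *)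

(* Defs.v *)
From HB Require Import structures.
From mathcomp Require Import all_boot all_order all_algebra.
Set Implicit Arguments. Unset Strict Implicit. Unset Printing Implicit Defensive.
Import Order.TTheory GRing.Theory Num.Theory.
Local Open Scope ring_scope.

(* Partitions are represented as sequences of their positive parts:
   mu = [:: mu_1; mu_2; ...], so mu_i = nth 0 mu (i-1) (0 beyond the length). *)
Definition is_partition (mu : seq nat) : bool :=
  sorted geq mu && all (fun x => 0 < x)%N mu.

Definition part_sub (mu nu : seq nat) : Prop :=
  forall i : nat, (nth 0 mu i <= nth 0 nu i)%N.

Definition part_in_box (a b : nat) (mu : seq nat) : bool :=
  (size mu <= b)%N && (nth 0 mu 0 <= a)%N.

Definition part_size (mu : seq nat) : nat := sumn mu.

Section Defs.
Variable R : realFieldType.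
Variables m n : nat.
Notation M := 'M[R]_(m, n).

Definition is_pasm (A : M) : Prop :=
  (forall i j, A i j = 0 \/ A i j = 1 \/ A i j = -1) /\
  (forall i j, let s := \sum_(i' < m | (i' <= i)%N) A i' j in s = 0 \/ s = 1) /\
  (forall i j, let s := \sum_(j' < n | (j' <= j)%N) A i j' in s = 0 \/ s = 1).

Definition conv (S : M -> Prop) (x : M) : Prop :=
  exists (k : nat) (p : 'I_k -> M) (w : 'I_k -> R),
    (forall i, S (p i)) /\ (forall i, 0 <= w i) /\
    \sum_i w i = 1 /\ x = \sum_i w i *: p i.

Definition PASM : M -> Prop := conv is_pasm.

(* The matrix M^mu (0-indexed rows/columns):
   row 0 has a 1 in column mu_1; for 1 <= i <= m-1 (row i+1 in 1-indexed
   convention, k = i), if mu_i > mu_{i+1} then row i has 1 in column mu_{i+1}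
   and -1 in column mu_i. *)
Definition Mmu (mu : seq nat) : M :=
  \matrix_(i < m, j < n)
    if (i == 0%N :> nat) then ((j == nth 0 mu 0 :> nat))%:R
    else if (nth 0 mu i < nth 0 mu i.-1)%N
         then ((j == nth 0 mu i :> nat))%:R - ((j == nth 0 mu i.-1 :> nat))%:R
         else 0.

Definition PASM_skew (lam nu : seq nat) : M -> Prop :=
  conv (fun X => exists mu, is_partition mu /\ part_sub lam mu /\
                            part_sub mu nu /\ X = Mmu mu).

Definition dotm (c x : M) : R := \sum_i \sum_j c i j * x i j.

Definition is_face (P F : M -> Prop) : Prop :=
  exists (c : M) (b : R),
    (forall x, P x -> dotm c x <= b) /\
    (forall x, F x <-> (P x /\ dotm c x = b)).

Definition aff_indep (s : seq M) : bool :=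
  match s with
  | [::] => true
  | x0 :: s' => free [seq x - x0 | x <- s']
  end.

Definition aff_dim (F : M -> Prop) (d : nat) : Prop :=
  (exists s : seq M, size s = d.+1 /\ (forall x, x \in s -> F x) /\ aff_indep s) /\
  (forall s : seq M, size s = d.+2 -> (forall x, x \in s -> F x) -> ~~ aff_indep s).

End Defs.

Arguments PASM R m n : clear implicits.
Arguments PASM_skew R m n lam nu : clear implicits.

(* Main.v *)
Require Import Defs.
From HB Require Import structures.
From mathcomp Require Import all_boot all_order all_algebra.
From mathcomp Require Import zify ring lra.
Import Order.TTheory GRing.Theory Num.Theory.
Set Implicit Arguments. Unset Strict Implicit.

Lemma geq_trans' : transitive geq.
Proof. by move=> a b c h1 h2; apply: leq_trans h2 h1. Qed.

Lemma part_geq s : is_partition s -> forall i j, i <= j -> nth 0 s j <= nth 0 s i.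
Proof.
move=> /andP[hs _] i j hij.
case: (ltnP j (size s)) => hj; last by rewrite nth_default.
have := sorted_leq_nth geq_trans' (fun x => leqnn x) 0 hs.
move=> /(_ i j); apply => //; rewrite inE //; exact: leq_ltn_trans hij hj.
Qed.

Lemma part_pos s : is_partition s -> forall i, i < size s -> 0 < nth 0 s i.
Proof. by move=> /andP[_ /(all_nthP 0) h]. Qed.

Lemma part_of_nth s : (forall i, nth 0 s i.+1 <= nth 0 s i) ->
  (forall i, i < size s -> 0 < nth 0 s i) -> is_partition s.
Proof.
move=> h1 h2; apply/andP; split; first by apply/(sortedP 0) => i _; apply: h1.
by apply/(all_nthP 0).
Qed.

Lemma part_size_le s t : is_partition s -> part_sub s t -> size s <= size t.
Proof.
move=> ps st; rewrite leqNgt; apply/negP => h.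
have := st (size t); rewrite (nth_default 0 (leqnn _)) leqn0.
by move/eqP => e; have := part_pos ps h; rewrite e.
Qed.

Lemma sumn_nth s K : size s <= K -> sumn s = \sum_(0 <= i < K) nth 0 s i.
Proof.
move=> hK; rewrite sumnE (big_nth 0) (@big_cat_nat _ _ _ (size s) 0 K _ _ (leq0n _) hK) /=.
rewrite [X in _ = _ + X]big1_seq ?addn0 // => i /andP[_].
by rewrite mem_index_iota => /andP[h _]; rewrite nth_default.
Qed.

Lemma filter_pos_nth l : sorted geq l -> forall k,
  nth 0 [seq x <- l | 0 < x] k = nth 0 l k.
Proof.
elim: l => [//|x l IH] hs k /=.
have hl : sorted geq l by apply: path_sorted hs.
case: (posnP x) => hx.
- have hall : all (geq x) l := order_path_min geq_trans' hs.
  have z : forall y, y \in l -> y = 0.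
    by move=> y /(allP hall); rewrite hx /= leqn0 => /eqP.
  have -> : [seq x0 <- l | 0 < x0] = [::].
    apply/eqP; rewrite -[_ == _]negbK -has_filter; apply/hasPn => y /z ->. by [].
  rewrite nth_nil; case: k => [|k] /=; first by rewrite hx.
  case: (ltnP k (size l)) => hk; last by rewrite nth_default.
  by rewrite (z _ (mem_nth 0 hk)).
- by case: k => [|k] //=; rewrite IH.
Qed.

Lemma mu_of_p (p : nat -> nat) K : (forall i, i < K -> p i.+1 <= p i) ->
  is_partition [seq x <- map p (iota 0 K.+1) | 0 < x] /\
  forall k, nth 0 [seq x <- map p (iota 0 K.+1) | 0 < x] k = if k <= K then p k else 0.
Proof.
move=> hm.
have hs : sorted geq (map p (iota 0 K.+1)).
  apply/(sortedP 0) => i; rewrite size_map size_iota => hi.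
  have hi2 : i < K.+1 by apply: ltnW.
  rewrite !(nth_map 0) ?size_iota // !nth_iota // !add0n /=.
  exact: hm.
split.
- apply/andP; split; [exact: (sorted_filter geq_trans' _ hs) | exact: filter_all].
- move=> k; rewrite filter_pos_nth //; case: ifP => hk.
  + by rewrite (nth_map 0) ?size_iota ?ltnS // nth_iota ?ltnS.
  + by rewrite nth_default // size_map size_iota leqNgt ltnS hk.
Qed.

Lemma sumn_map_iota (g : nat -> nat) K : sumn (map g (iota 0 K)) = \sum_(0 <= i < K) g i.
Proof. by rewrite sumnE big_map /index_iota subn0. Qed.

Local Open Scope ring_scope.

Lemma sum_ind (R : realFieldType) (J q : nat) :
  \sum_(0 <= k < J.+1) ((k == q)%:R : R) = (q <= J)%:R.
Proof.
elim: J => [|J IH]; first by rewrite big_nat1 leqn0 eq_sym.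
rewrite big_nat_recr //= IH.
case: (ltngtP q J.+1) => h; rewrite ?addr0 ?add0r.
- by rewrite -ltnS h.
- by rewrite leqNgt (ltnW h).
- by rewrite h ltnn add0r.
Qed.

Lemma sum_ord_le (R : realFieldType) K i (F : nat -> R) : (i < K)%N ->
  \sum_(k < K | (k <= i)%N) F k = \sum_(0 <= k < i.+1) F k.
Proof.
move=> hi; rewrite (big_nat_widen _ _ _ _ _ hi) big_mkord.
by apply: eq_bigl => k /=; rewrite ltnS.
Qed.

Section Mat.
Variable R : realFieldType.
Variables m n : nat.
Notation MM := 'M[R]_(m.+1, n.+1).

Definition ent (A : MM) (i j : nat) : R :=
  if (i <= m)%N && (j <= n)%N then A (inord i) (inord j) else 0.

Lemma entE (A : MM) (i : 'I_m.+1) (j : 'I_n.+1) : A i j = ent A i j.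
Proof. by rewrite /ent -[(i <= m)%N]ltnS -[(j <= n)%N]ltnS !ltn_ord !inord_val. Qed.

Definition colp (A : MM) i j := \sum_(0 <= k < i.+1) ent A k j.
Definition rowp (A : MM) i j := \sum_(0 <= k < j.+1) ent A i k.

Lemma colpE (A : MM) (i : nat) (j : 'I_n.+1) :
  \sum_(i' < m.+1 | (i' <= i)%N) A i' j = colp A (minn i m) j.
Proof.
rewrite (eq_bigr (fun k : 'I_m.+1 => ent A k j)) => [|k _]; last exact: entE.
rewrite /colp -(@sum_ord_le R m.+1 (minn i m) (fun k => ent A k j)) ?ltnS ?geq_minr //.
apply: eq_bigl => k; rewrite leq_min; have := ltn_ord k; rewrite ltnS => ->.
by rewrite andbT.
Qed.

Lemma rowpE (A : MM) (i : 'I_m.+1) (j : nat) :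
  \sum_(j' < n.+1 | (j' <= j)%N) A i j' = rowp A i (minn j n).
Proof.
rewrite (eq_bigr (fun k : 'I_n.+1 => ent A i k)) => [|k _]; last exact: entE.
rewrite /rowp -(@sum_ord_le R n.+1 (minn j n) (fun k => ent A i k)) ?ltnS ?geq_minr //.
apply: eq_bigl => k; rewrite leq_min; have := ltn_ord k; rewrite ltnS => ->.
by rewrite andbT.
Qed.

Lemma pasmP (A : MM) : is_pasm A <->
  (forall i j, (i <= m)%N -> (j <= n)%N ->
     ent A i j = 0 \/ ent A i j = 1 \/ ent A i j = -1) /\
  (forall i j, (i <= m)%N -> (j <= n)%N -> colp A i j = 0 \/ colp A i j = 1) /\
  (forall i j, (i <= m)%N -> (j <= n)%N -> rowp A i j = 0 \/ rowp A i j = 1).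
Proof.
split.
- move=> [h1 [h2 h3]]; split; [|split] => i j hi hj.
  + by have := h1 (inord i) (inord j); rewrite !entE !inordK.
  + have := h2 i (inord j); cbv zeta; rewrite colpE inordK //.
    by rewrite (minn_idPl hi).
  + have := h3 (inord i) j; cbv zeta; rewrite rowpE inordK //.
    by rewrite (minn_idPl hj).
- move=> [h1 [h2 h3]]; split; [|split] => i j.
  + by rewrite entE; apply: h1; rewrite -ltnS.
  + by cbv zeta; rewrite colpE; apply: h2; [rewrite geq_minr | rewrite -ltnS].
  + by cbv zeta; rewrite rowpE; apply: h3; [rewrite -ltnS | rewrite geq_minr].
Qed.

Lemma entMmu mu i j : (i <= m)%N -> (j <= n)%N ->
  ent (Mmu R m.+1 n.+1 mu) i j =
  if i == 0%N then (j == nth 0 mu 0)%:R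
  else if (nth 0 mu i < nth 0 mu i.-1)%N
       then (j == nth 0 mu i)%:R - (j == nth 0 mu i.-1)%:R else 0.
Proof. by move=> hi hj; rewrite /ent hi hj /Mmu mxE !inordK. Qed.

Lemma colp_rec (A : MM) i j : colp A i.+1 j = colp A i j + ent A i.+1 j.
Proof. by rewrite /colp big_nat_recr. Qed.
Lemma colp0 (A : MM) j : colp A 0 j = ent A 0 j.
Proof. by rewrite /colp big_nat1. Qed.
Lemma ent_colp (A : MM) i j : ent A i.+1 j = colp A i.+1 j - colp A i j.
Proof. by rewrite colp_rec addrAC subrr add0r. Qed.

Lemma colpMmu mu : is_partition mu -> forall i j, (i <= m)%N -> (j <= n)%N ->
  colp (Mmu R m.+1 n.+1 mu) i j = (j == nth 0 mu i)%:R.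
Proof.
move=> pm; elim=> [|i IH] j hi hj; first by rewrite colp0 entMmu.
rewrite colp_rec IH ?(ltnW hi) // entMmu //=.
case: ifP => h; first by rewrite addrC subrK.
have e : nth 0 mu i.+1 = nth 0 mu i.
  by apply/eqP; rewrite eqn_leq part_geq // leqNgt h.
by rewrite addr0 e.
Qed.

Lemma colp_inj (A : MM) B : (forall i j, (i <= m)%N -> (j <= n)%N -> colp A i j = colp B i j) ->
  A = B.
Proof.
move=> h; apply/matrixP => i j; rewrite !entE.
have hi : (i <= m)%N by rewrite -ltnS.
have hj : (j <= n)%N by rewrite -ltnS.
case: (nat_of_ord i) hi => [|i'] hi; first by rewrite -!colp0 h.
by rewrite !ent_colp !h // ltnW.
Qed.

Section FromP.
Variable A : MM.
Variable p : nat -> nat.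
Hypothesis hp : forall i, (i <= m)%N -> (p i <= n)%N.
Hypothesis hc : forall i j, (i <= m)%N -> (j <= n)%N -> colp A i j = (j == p i)%:R.

Lemma ent0P j : (j <= n)%N -> ent A 0 j = (j == p 0)%:R.
Proof. by move=> hj; rewrite -colp0 hc. Qed.

Lemma entSP i j : (i < m)%N -> (j <= n)%N ->
  ent A i.+1 j = (j == p i.+1)%:R - (j == p i)%:R.
Proof. by move=> hi hj; rewrite ent_colp !hc // ltnW. Qed.

Lemma rowp0P j : (j <= n)%N -> rowp A 0 j = (p 0 <= j)%:R.
Proof.
move=> hj; rewrite /rowp -sum_ind; apply: eq_big_nat => k hk.
by rewrite ent0P //; apply: leq_trans hj; rewrite -ltnS; case/andP: hk.
Qed.

Lemma rowpSP i j : (i < m)%N -> (j <= n)%N ->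
  rowp A i.+1 j = (p i.+1 <= j)%:R - (p i <= j)%:R.
Proof.
move=> hi hj; rewrite /rowp -!sum_ind -sumrB; apply: eq_big_nat => k hk.
by rewrite entSP //; apply: leq_trans hj; rewrite -ltnS; case/andP: hk.
Qed.

Hypothesis hmono : forall i, (i < m)%N -> (p i.+1 <= p i)%N.

Lemma Gpasm : is_pasm A.
Proof.
apply/pasmP; split; [|split] => i j hi hj.
- case: i hi => [|i] hi.
  + by rewrite ent0P //; case: (j == p 0); [right; left|left].
  + rewrite entSP //; case: (j == p i.+1); case: (j == p i); rewrite ?subrr ?subr0 ?sub0r;
    by [left | right; left | right; right].
- by rewrite hc //; case: (j == p i); [right|left].
- case: i hi => [|i] hi.
  + by rewrite rowp0P //; case: (p 0 <= j)%N; [right|left].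
  + rewrite rowpSP //; have := hmono hi.
    case: (leqP (p i) j) => h1 h2.
    * by rewrite (leq_trans h2 h1) subrr; left.
    * by rewrite subr0; case: (p i.+1 <= j)%N; [right|left].
Qed.

End FromP.
End Mat.

Section Face.
Variable R : realFieldType.
Variables m n : nat.
Notation MM := 'M[R]_(m.+1, n.+1).
Variables lam nu : seq nat.
Hypothesis plam : is_partition lam.
Hypothesis pnu : is_partition nu.
Hypothesis hsub : part_sub lam nu.
Hypothesis hbox : part_in_box n m nu.

Lemma nu_big k : (m <= k)%N -> nth 0 nu k = 0%N.
Proof. by move=> hk; rewrite nth_default //; case/andP: hbox => h _; apply: leq_trans h hk. Qed.

Lemma nu_le_n k : (nth 0 nu k <= n)%N.
Proof.
case/andP: hbox => _ h; apply: leq_trans h; exact: part_geq.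
Qed.

Definition bad (i j : nat) := (j < nth 0 lam i)%N || (nth 0 nu i < j)%N.

Definition fval (A : MM) := rowp A 0 n - \sum_(k < m) rowp A k.+1 n -
  \sum_(i < m.+1) \sum_(j < n.+1 | bad i j) colp A i j.

Definition cvec : MM :=
  (\matrix_(i, j) (if (i == 0 :> nat) then 1 else -1)) -
  \sum_(i' < m.+1) \sum_(j' < n.+1 | bad i' j')
     (\matrix_(k, l) (((k <= i')%N && (l == j'))%:R)).

Lemma dotm0 (x : MM) : dotm 0 x = 0.
Proof. by rewrite /dotm big1 // => i _; rewrite big1 // => j _; rewrite mxE mul0r. Qed.

Lemma dotmD (c1 c2 x : MM) : dotm (c1 + c2) x = dotm c1 x + dotm c2 x.
Proof.
rewrite /dotm -big_split; apply: eq_bigr => i _; rewrite -big_split.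
by apply: eq_bigr => j _; rewrite mxE mulrDl.
Qed.

Lemma dotmN (c x : MM) : dotm (- c) x = - dotm c x.
Proof.
rewrite /dotm -sumrN; apply: eq_bigr => i _; rewrite -sumrN.
by apply: eq_bigr => j _; rewrite mxE mulNr.
Qed.

Lemma dotm_sum (I : Type) (r : seq I) (P : pred I) (F : I -> MM) (x : MM) :
  dotm (\sum_(k <- r | P k) F k) x = \sum_(k <- r | P k) dotm (F k) x.
Proof.
elim/big_rec2: _ => [|k a b _ <-]; first exact: dotm0.
by rewrite dotmD.
Qed.

Lemma dotm0r (c : MM) : dotm c 0 = 0.
Proof. by rewrite /dotm big1 // => i _; rewrite big1 // => j _; rewrite mxE mulr0. Qed.

Lemma dotmDr (c x y : MM) : dotm c (x + y) = dotm c x + dotm c y.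
Proof.
rewrite /dotm -big_split; apply: eq_bigr => i _; rewrite -big_split.
by apply: eq_bigr => j _; rewrite mxE mulrDr.
Qed.

Lemma dotmZr (c x : MM) a : dotm c (a *: x) = a * dotm c x.
Proof.
rewrite /dotm mulr_sumr; apply: eq_bigr => i _; rewrite mulr_sumr.
by apply: eq_bigr => j _; rewrite mxE mulrCA.
Qed.

Lemma dotm_lin (c : MM) k (w : 'I_k -> R) (p : 'I_k -> MM) :
  dotm c (\sum_i w i *: p i) = \sum_i w i * dotm c (p i).
Proof.
elim/big_rec2: _ => [|i a b _ <-]; first exact: dotm0r.
by rewrite dotmDr dotmZr.
Qed.

Lemma rowsumE (A : MM) (i : 'I_m.+1) : \sum_(j < n.+1) A i j = rowp A i n.
Proof. by rewrite /rowp big_mkord; apply: eq_bigr => j _; rewrite entE. Qed.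

Lemma dotm_c0 (A : MM) :
  dotm (\matrix_(i, j) (if (i == 0 :> nat) then 1 else -1)) A =
  rowp A 0 n - \sum_(k < m) rowp A k.+1 n.
Proof.
rewrite /dotm big_ord_recl /=.
rewrite (eq_bigr (fun j => A ord0 j)) => [|j _]; last by rewrite mxE /= mul1r.
rewrite rowsumE -sumrN; congr (_ + _); apply: eq_bigr => k _.
rewrite (eq_bigr (fun j => - A (lift ord0 k) j)) => [|j _]; last by rewrite mxE lift0 /= mulN1r.
by rewrite sumrN rowsumE lift0.
Qed.

Lemma dotm_colind (A : MM) (i' : 'I_m.+1) (j' : 'I_n.+1) :
  dotm (\matrix_(k, l) (((k <= i')%N && (l == j'))%:R)) A = colp A i' j'.
Proof.
have inner : forall k : 'I_m.+1,
  \sum_(l < n.+1) (\matrix_(k0, l0) (((k0 <= i')%N && (l0 == j'))%:R) : MM) k l * A k l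
  = if (k <= i')%N then A k j' else 0.
  move=> k; rewrite (bigD1 j') //= big1 ?addr0 => [|l /negbTE hl]; last first.
    by rewrite mxE hl andbF mul0r.
  by rewrite mxE eqxx andbT; case: ifP => _; rewrite ?mul1r ?mul0r.
rewrite /dotm (eq_bigr _ (fun k _ => inner k)) -big_mkcond colpE.
by rewrite (minn_idPl _) // -ltnS.
Qed.

Lemma dotm_cvec (A : MM) : dotm cvec A = fval A.
Proof.
rewrite /cvec /fval dotmD dotmN dotm_c0 dotm_sum; congr (_ - _).
apply: eq_bigr => i _; rewrite dotm_sum; apply: eq_bigr => j _.
exact: dotm_colind.
Qed.

End Face.

Section CS.
Variable R : realFieldType.
Variables m n : nat.
Notation MM := 'M[R]_(m.+1, n.+1).

Lemma entL a (A B : MM) i j : ent (a *: A + B) i j = a * ent A i j + ent B i j.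
Proof. by rewrite /ent; case: ifP => _; rewrite ?mxE // mulr0 addr0. Qed.

Lemma colpL a (A B : MM) i j : colp (a *: A + B) i j = a * colp A i j + colp B i j.
Proof.
rewrite /colp mulr_sumr -big_split; apply: eq_bigr => k _; exact: entL.
Qed.

Definition cs (A : MM) : MM := \matrix_(i, j) \sum_(0 <= j' < j.+1) colp A i j'.

Fact cs_is_linear : linear cs.
Proof.
move=> a A B; apply/matrixP => i j; rewrite !mxE mulr_sumr -big_split.
by apply: eq_bigr => k _; rewrite colpL.
Qed.
HB.instance Definition _ := GRing.isLinear.Build R MM MM _ cs cs_is_linear.
Definition csL : 'End(MM) := linfun cs.
Lemma csLE A : csL A = cs A. Proof. by rewrite lfunE. Qed.

Definition Smu (mu : seq nat) : MM := \matrix_(i, j) (nth 0 mu i <= j)%:R.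

Lemma csMmu mu : is_partition mu -> cs (Mmu R m.+1 n.+1 mu) = Smu mu.
Proof.
move=> pm; apply/matrixP => i j; rewrite !mxE -sum_ind.
apply: eq_big_nat => k /andP[_ hk]; rewrite (@colpMmu R m n mu pm) ?leq_ord //.
by apply: leq_trans (leq_ord j); rewrite -ltnS.
Qed.

Lemma cs_inj (A B : MM) : cs A = cs B -> A = B.
Proof.
move=> e; apply: colp_inj => i j hi hj.
have E : forall j, (j <= n)%N ->
    \sum_(0 <= j' < j.+1) colp A i j' = \sum_(0 <= j' < j.+1) colp B i j'.
  move=> j1 hj1; have := congr1 (fun M : MM => M (inord i) (inord j1)) e.
  by rewrite /= !mxE !inordK.
case: j hj => [|j] hj; first by have := E 0%N hj; rewrite !big_nat1.
have E1 := E j.+1 hj; have E0 := E j (ltnW hj).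
rewrite big_nat_recr //= [in RHS]big_nat_recr //= in E1; lra.
Qed.

Lemma lker_csL : lker csL == 0%VS.
Proof. by apply/lker0P => A B; rewrite !csLE; exact: cs_inj. Qed.

Lemma free_cs (X : seq MM) : free (map csL X) = free X.
Proof.
by rewrite /free size_map -limg_span limg_dim_eq // (eqP lker_csL) capv0.
Qed.

Lemma conv1 (S : MM -> Prop) x : S x -> conv S x.
Proof.
move=> Sx; exists 1%N, (fun _ => x), (fun _ => 1); split => //; split => [i|].
  exact: ler01.
by split; rewrite big_ord1 // scale1r.
Qed.

End CS.
Section Face2.
Variable R : realFieldType.
Variables m n : nat.
Notation MM := 'M[R]_(m.+1, n.+1).
Variables lam nu : seq nat.
Hypothesis plam : is_partition lam.
Hypothesis pnu : is_partition nu.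
Hypothesis hsub : part_sub lam nu.
Hypothesis hbox : part_in_box n m nu.
Notation fval := (fval lam nu).
Notation bad := (bad lam nu).

Lemma pasm_facts (A : MM) : is_pasm A ->
  [/\ rowp A 0 n <= 1, forall k, (k < m)%N -> 0 <= rowp A k.+1 n &
      forall i j, (i <= m)%N -> (j <= n)%N -> 0 <= colp A i j].
Proof.
move/pasmP => [_ [hc hr]]; split.
- by case: (hr 0%N n isT (leqnn _)) => ->; rewrite ?ler01 ?lexx.
- by move=> k hk; case: (hr k.+1 n hk (leqnn _)) => ->; rewrite ?ler01 ?lexx.
- by move=> i j hi hj; case: (hc i j hi hj) => ->; rewrite ?ler01 ?lexx.
Qed.

Lemma fval_le1 (A : MM) : is_pasm A -> fval A <= 1.
Proof.
move=> /pasm_facts [h1 h2 h3].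
have s2 : 0 <= \sum_(k < m) rowp A k.+1 n by apply: sumr_ge0 => k _; apply: h2.
have s3 : 0 <= \sum_(i < m.+1) \sum_(j < n.+1 | bad i j) colp A i j.
  by apply: sumr_ge0 => i _; apply: sumr_ge0 => j _; apply: h3; rewrite ?leq_ord.
rewrite /fval; lra.
Qed.

Lemma Mmu_good mu : is_partition mu -> part_sub lam mu -> part_sub mu nu ->
  is_pasm (Mmu R m.+1 n.+1 mu) /\ fval (Mmu R m.+1 n.+1 mu) = 1.
Proof.
move=> pm hl hu.
have hp : forall i, (i <= m)%N -> (nth 0 mu i <= n)%N.
  by move=> i _; apply: leq_trans (hu i) (nu_le_n pnu hbox i).
have hc := @colpMmu R m n mu pm.
have hmono : forall i, (i < m)%N -> (nth 0 mu i.+1 <= nth 0 mu i)%N.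
  by move=> i _; apply: part_geq.
split; first exact: (Gpasm hc hmono).
rewrite /fval (rowp0P hc (leqnn n)) hp //.
rewrite big1 ?subr0; last first.
  move=> k _; rewrite (rowpSP hc (ltn_ord k) (leqnn n)) !hp ?subrr //.
  exact: ltnW.
rewrite big1 ?subr0 // => i _; rewrite big1 // => j hb.
rewrite hc ?leq_ord //; case: eqP => // e; move: hb; rewrite /bad e.
by rewrite ltnNge hl /= ltnNge hu.
Qed.

Lemma fval_eq1 (A : MM) : is_pasm A -> fval A = 1 ->
  exists mu, [/\ is_partition mu, part_sub lam mu, part_sub mu nu &
                 A = Mmu R m.+1 n.+1 mu].
Proof.
move=> hA hf; have [h1 h2 h3] := pasm_facts hA.
have [_ [hc01 hr01]] := (pasmP A).1 hA.
have s2 : 0 <= \sum_(k < m) rowp A k.+1 n by apply: sumr_ge0 => k _; apply: h2.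
have s3 : 0 <= \sum_(i < m.+1) \sum_(j < n.+1 | bad i j) colp A i j.
  by apply: sumr_ge0 => i _; apply: sumr_ge0 => j _; apply: h3; rewrite ?leq_ord.
move: hf; rewrite /fval => hf.
have e1 : rowp A 0 n = 1 by lra.
have e2 : \sum_(k < m) rowp A k.+1 n = 0 by lra.
have e3 : \sum_(i < m.+1) \sum_(j < n.+1 | bad i j) colp A i j = 0 by lra.
have hr : forall k, (k < m)%N -> rowp A k.+1 n = 0.
  move=> k hk.
  have H : forall i : 'I_m, true -> 0 <= rowp A i.+1 n by move=> i _; apply: h2.
  exact: (@psumr_eq0P _ _ _ _ H e2 (Ordinal hk) isT).
have hb : forall i j, (i <= m)%N -> (j <= n)%N -> bad i j -> colp A i j = 0.
  move=> i j hi hj hbij.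
  have hin : forall i0 : 'I_m.+1, true -> 0 <= \sum_(j < n.+1 | bad i0 j) colp A i0 j.
    by move=> i0 _; apply: sumr_ge0 => j0 _; apply: h3; rewrite ?leq_ord.
  have E := @psumr_eq0P _ _ _ _ hin e3 (inord i) isT.
  have hin2 : forall j0 : 'I_n.+1, bad (inord i : 'I_m.+1) j0 -> 0 <= colp A (inord i : 'I_m.+1) j0.
    by move=> j0 _; apply: h3; rewrite ?leq_ord.
  have := @psumr_eq0P _ _ _ _ hin2 E (inord j); rewrite !inordK //; exact.
have sumcol : forall i, (i <= m)%N -> \sum_(0 <= j < n.+1) colp A i j = 1.
  move=> i hi.
  have -> : \sum_(0 <= j < n.+1) colp A i j = \sum_(0 <= k < i.+1) rowp A k n.
    by rewrite /colp /rowp exchange_big_nat.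
  elim: i hi => [|i IH] hi; first by rewrite big_nat1.
  by rewrite big_nat_recr //= IH ?(ltnW hi) // hr // addr0.
pose p := fun i => if [pick j : 'I_n.+1 | colp A i j == 1] is Some j then val j else 0%N.
have hpc : forall i, (i <= m)%N ->
    (p i <= n)%N /\ forall j, (j <= n)%N -> colp A i j = (j == p i)%:R.
  move=> i hi; rewrite /p; case: pickP => [j0 /eqP hj0 | none].
  - split; first exact: leq_ord.
    have sum1 := sumcol i hi; rewrite big_mkord (bigD1 j0) //= hj0 in sum1.
    have rest0 : \sum_(j < n.+1 | j != j0) colp A i j = 0 by lra.
    move=> j hj; case: (eqVneq (inord j : 'I_n.+1) j0) => e.
    + have ej : j = j0 by rewrite -e inordK.
      by rewrite ej eqxx hj0.
    + have hnn : forall j1 : 'I_n.+1, j1 != j0 -> 0 <= colp A i j1.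
        by move=> j1 _; apply: h3; rewrite ?leq_ord.
      have := @psumr_eq0P _ _ _ _ hnn rest0 (inord j) e; rewrite inordK // => ->.
      have : j != j0 :> nat.
        by apply: contra e => /eqP ej; apply/eqP/val_inj; rewrite /= inordK.
      by move/negbTE => ->.
  - exfalso; have := sumcol i hi; rewrite big_mkord big1 => [|j _].
      by move/eqP; rewrite eq_sym oner_eq0.
    have := none j; case: (hc01 i j hi) => //; first exact: leq_ord.
    by move=> ->; rewrite eqxx.
have hp' : forall i, (i <= m)%N -> (p i <= n)%N by move=> i /hpc [].
have hc' : forall i j, (i <= m)%N -> (j <= n)%N -> colp A i j = (j == p i)%:R.
  by move=> i j hi hj; have [_ H] := hpc i hi; apply: H.
have hbnd : forall i, (i <= m)%N -> (nth 0 lam i <= p i)%N && (p i <= nth 0 nu i)%N.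
  move=> i hi; have H := hb i (p i) hi (hp' i hi); rewrite hc' ?hp' // eqxx in H.
  apply/andP; split; rewrite leqNgt; apply/negP => hh; move: H;
    by rewrite /bad hh ?orbT => /(_ isT)/eqP; rewrite pnatr_eq0.
have hmono : forall i, (i < m)%N -> (p i.+1 <= p i)%N.
  move=> i hi; case: (leqP (p i.+1) (p i)) => // hlt; exfalso.
  have := hr01 i.+1 (p i) hi (hp' i (ltnW hi)).
  rewrite (rowpSP hc' hi (hp' i (ltnW hi))) leqnn leqNgt hlt /=.
  by move=> [H|H]; lra.
have [pmu hnth] := mu_of_p hmono.
eexists; split; first exact: pmu.
- move=> k; rewrite hnth; case: ifP => hk; first by case/andP: (hbnd k hk).
  have := hsub k; rewrite (nu_big hbox) //; last by rewrite ltnW // ltnNge hk.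
- move=> k; rewrite hnth; case: ifP => hk //; by case/andP: (hbnd k hk).
- apply: colp_inj => i j hi hj; by rewrite hc' // (@colpMmu R m n _ pmu) // hnth hi.
Qed.

Lemma face_part : is_face (PASM R m.+1 n.+1) (PASM_skew R m.+1 n.+1 lam nu).
Proof.
exists (cvec R m n lam nu), 1; split.
- move=> x [k [p [w [hp [hw [hw1 ->]]]]]].
  rewrite dotm_lin -hw1; apply: ler_sum => i _.
  rewrite dotm_cvec -[X in _ <= X]mulr1; apply: (ler_wpM2l (hw i)).
  exact: fval_le1.
- move=> x; split.
  + move=> [k [p [w [hp [hw [hw1 ex]]]]]]; split.
    * exists k, p, w; split => // i.
      have [mu [pm [hl [hu ->]]]] := hp i; exact: (Mmu_good pm hl hu).1.
    * rewrite ex dotm_lin -hw1; apply: eq_bigr => i _.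
      have [mu [pm [hl [hu ->]]]] := hp i.
      by rewrite dotm_cvec (Mmu_good pm hl hu).2 mulr1.
  + move=> [[k [p [w [hp [hw [hw1 ex]]]]]] hd].
    have hs : dotm (cvec R m n lam nu) x = \sum_i w i * fval (p i).
      by rewrite ex dotm_lin; apply: eq_bigr => i _; rewrite dotm_cvec.
    have hd' : \sum_i w i * (1 - fval (p i)) = 0.
      rewrite (eq_bigr (fun i => w i - w i * fval (p i))) => [|i _]; last first.
        by rewrite mulrBr mulr1.
      by rewrite sumrB hw1 -hs hd subrr.
    have hnn : forall i : 'I_k, true -> 0 <= w i * (1 - fval (p i)).
      move=> i _; apply: mulr_ge0 (hw i) _; rewrite subr_ge0; exact: fval_le1.
    have hw0 : forall i, w i * (1 - fval (p i)) = 0.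
      by move=> i; apply: (@psumr_eq0P _ _ _ _ hnn hd' i isT).
    exists k, (fun i => if w i == 0 then Mmu R m.+1 n.+1 nu else p i), w.
    split; [|split; [done|split; [done|]]].
    * move=> i; case: eqP => [_|wne].
        by exists nu; split => //; split => //; split => // j.
      have := hw0 i; move/eqP; rewrite mulf_eq0 => /orP[/eqP //|].
      rewrite subr_eq0 eq_sym => /eqP hf1.
      have [mu [pm hl hu ->]] := fval_eq1 (hp i) hf1.
      by exists mu.
    * rewrite ex; apply: eq_bigr => i _; case: eqP => // ->; by rewrite !scale0r.
Qed.

Definition cells : seq MM :=
  flatten [seq [seq (delta_mx (inord i) (inord j) : MM) |
                 j <- iota (nth 0 lam i) (nth 0 nu i - nth 0 lam i)] | i <- iota 0 m.+1].

Lemma size_cells : size cells = (sumn nu - sumn lam)%N.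
Proof.
rewrite size_flatten /shape -map_comp.
rewrite (eq_map (g := fun i => nth 0 nu i - nth 0 lam i)%N) => [|i]; last first.
  by rewrite /= size_map size_iota.
rewrite sumn_map_iota sumnB; last by move=> i _; apply: hsub.
have hnu : (size nu <= m.+1)%N by case/andP: hbox => h _; apply: leq_trans h _.
have hlam : (size lam <= m.+1)%N := leq_trans (part_size_le plam hsub) hnu.
by rewrite -(@sumn_nth nu m.+1) // -(@sumn_nth lam m.+1).
Qed.

Lemma Smu_diff_in mu : part_sub lam mu -> part_sub mu nu ->
  Smu R m n mu - Smu R m n lam \in <<cells>>%VS.
Proof.
move=> hl hu.
rewrite [Smu _ _ _ mu - _]matrix_sum_delta; apply: memv_suml => i _; apply: memv_suml => j _.
rewrite !mxE.
case: (leqP (nth 0 lam i) j) => h1; last first.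
  have h2 : (nth 0 mu i <= j)%N = false by rewrite leqNgt (leq_trans h1 (hl i)).
  by rewrite h2 subrr scale0r mem0v.
case: (leqP (nth 0 mu i) j) => h2; first by rewrite subrr scale0r mem0v.
apply: memvZ; apply: memv_span; apply/flatten_mapP; exists (val i).
  by rewrite mem_iota /= add0n ltn_ord.
apply/mapP; exists (val j); last by rewrite !inord_val.
rewrite mem_iota h1 /= subnKC; [exact: leq_trans h2 (hu i) | exact: hsub i].
Qed.

Lemma F_diff_in x : PASM_skew R m.+1 n.+1 lam nu x ->
  csL R m n x - Smu R m n lam \in <<cells>>%VS.
Proof.
move=> [k [p [w [hp [hw [hw1 ->]]]]]].
rewrite linear_sum.
have -> : Smu R m n lam = \sum_i w i *: Smu R m n lam by rewrite -scaler_suml hw1 scale1r.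
rewrite -sumrB; apply: memv_suml => i _.
rewrite linearZ /= -scalerBr; apply: memvZ.
have [mu [pm [hl [hu ->]]]] := hp i; rewrite csLE csMmu //; exact: Smu_diff_in.
Qed.

Lemma upper s : size s = (sumn nu - sumn lam).+2 ->
  (forall x, x \in s -> PASM_skew R m.+1 n.+1 lam nu x) -> ~~ aff_indep s.
Proof.
case: s => [//|x0 s'] /= [hs] hF; apply/negP => hfree.
have : free (map (csL R m n) [seq x - x0 | x <- s']) by rewrite free_cs.
move/eqP; rewrite size_map size_map hs => hdim.
have hsub' : (<<map (csL R m n) [seq x - x0 | x <- s']>> <= <<cells>>)%VS.
  apply/span_subvP => v /mapP [y /mapP [x hx ->] ->].
  rewrite linearB /=.
  have -> : csL R m n x - csL R m n x0 =
            (csL R m n x - Smu R m n lam) - (csL R m n x0 - Smu R m n lam).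
    by rewrite opprB addrA subrK.
  apply: memvB; apply: F_diff_in; apply: hF; first by rewrite in_cons hx orbT.
  exact: mem_head.
have := dimvS hsub'; rewrite hdim => hle.
by have := leq_trans hle (dim_span _); rewrite size_cells ltnn.
Qed.

Lemma lower k : forall nu', is_partition nu' -> part_sub lam nu' -> part_sub nu' nu ->
  (sumn nu' - sumn lam)%N = k ->
  exists Y : seq (seq nat), [/\ size Y = k,
    (forall mu, mu \in Y -> [/\ is_partition mu, part_sub lam mu & part_sub mu nu']) &
    free [seq Smu R m n mu - Smu R m n lam | mu <- Y]].
Proof.
elim: k => [|k IH] nu' pn' hl' hu' hk.
  by exists [::]; split => //; exact: nil_free.
pose P := fun i => (nth 0%N lam i < nth 0%N nu' i)%N.
have hsz0 : forall i, P i -> (i < size nu')%N.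
  move=> i hi; rewrite ltnNge; apply/negP => hlt; move: hi.
  by rewrite /P (nth_default 0 hlt) ltn0.
have hub : forall i, P i -> (i <= size nu')%N by move=> i /hsz0 /ltnW.
have hex : exists i, P i.
  case: (pickP (fun i : 'I_(size nu') => P i)) => [i hi|none]; first by exists (val i).
  exfalso; have : (sumn nu' <= sumn lam)%N.
    rewrite (@sumn_nth nu' (size nu' + size lam)) ?leq_addr //.
    rewrite (@sumn_nth lam (size nu' + size lam)) ?leq_addl //.
    apply: leq_sum => i _; case: (ltnP i (size nu')) => hi; last by rewrite nth_default.
    by have := none (Ordinal hi); rewrite /P /= => /negbT; rewrite -leqNgt.
  by move: hk; lia.
case: (ex_maxnP hex hub) => i0 Pi0 hmax.
pose j0 := (nth 0%N nu' i0).-1.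
have hsz : (i0 < size nu')%N := hsz0 _ Pi0.
have hpos0 : (0 < nth 0%N nu' i0)%N := leq_ltn_trans (leq0n _) Pi0.
have hj0 : nth 0%N nu' i0 = j0.+1 by rewrite /j0 prednK.
have hlamj0 : (nth 0%N lam i0 <= j0)%N by rewrite -ltnS -hj0.
have hafter : forall k', (i0 < k')%N -> (nth 0%N nu' k' <= j0)%N.
  move=> k' hk'; have nP : ~~ P k' by apply/negP => /hmax; rewrite leqNgt hk'.
  rewrite /P -leqNgt in nP; apply: leq_trans nP _.
  exact: leq_trans (part_geq plam (ltnW hk')) hlamj0.
pose nu'' := if nth 0%N nu' i0 == 1%N then take i0 nu' else set_nth 0%N nu' i0 j0.
have hnth : forall k', nth 0%N nu'' k' = if k' == i0 then j0 else nth 0%N nu' k'.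
  move=> k'; rewrite /nu''; case: ifP => h1; last by rewrite nth_set_nth.
  have ej : j0 = 0%N by rewrite /j0 (eqP h1).
  case: (ltngtP k' i0) => hc; first by rewrite nth_take.
  - rewrite nth_default ?size_takel ?(ltnW hsz) ?(ltnW hc) //.
    by have := hafter k' hc; rewrite ej leqn0 => /eqP ->.
  - by rewrite hc nth_default ?size_takel ?(ltnW hsz).
have hsize : (size nu'' <= size nu')%N.
  rewrite /nu''; case: ifP => _; first by rewrite size_take; case: ifP => // /ltnW.
  by rewrite size_set_nth geq_max hsz leqnn.
have pn'' : is_partition nu''.
  apply: part_of_nth => [k'|k' hk'].
  - rewrite !hnth; case: (eqVneq k'.+1 i0) => e1; case: (eqVneq k' i0) => e2.
    + by move: e1; rewrite e2 => /eqP; lia.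
    + apply: leq_trans (leqnSn j0) _; rewrite -hj0 -e1; exact: (@part_geq nu' pn' k' k'.+1 (leqnSn k')).
    + by apply: hafter; rewrite e2.
    + exact: (@part_geq nu' pn' k' k'.+1 (leqnSn k')).
  - rewrite hnth; case: eqP => e.
    + move: hk'; rewrite /nu'' e; case: ifP => h1.
        by rewrite size_takel ?ltnn // ltnW.
      by move=> _; move: h1 hj0; lia.
    + by apply: (@part_pos nu' pn' k'); apply: leq_trans hk' hsize.
have hl'' : part_sub lam nu''.
  by move=> k'; rewrite hnth; case: eqP => [->|_] //; exact: hl'.
have hu'' : part_sub nu'' nu'.
  by move=> k'; rewrite hnth; case: eqP => [->|_] //; rewrite hj0.
have hk'' : (sumn nu'' - sumn lam)%N = k.
  have e : sumn nu' = (sumn nu'').+1.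
    rewrite (@sumn_nth nu' (size nu')) // (@sumn_nth nu'' (size nu')) //.
    rewrite (eq_bigr (fun k' => nth 0%N nu'' k' + (k' == i0))%N) => [|k' _]; last first.
      by rewrite hnth; case: eqP => [->|_]; rewrite ?addn0 // hj0 addn1.
    rewrite big_split /= -addn1; congr (_ + _)%N.
    rewrite big_mkord (bigD1 (Ordinal hsz)) //= eqxx big1 ?addn0 //.
    by move=> k' /negbTE hk'; rewrite -val_eqE /= in hk'; rewrite hk'.
  by move: hk; rewrite e; lia.
have hu2 : part_sub nu'' nu by move=> k'; exact: leq_trans (hu'' k') (hu' k').
have [Y' [hY1 hY2 hY3]] := IH nu'' pn'' hl'' hu2 hk''.
exists (nu' :: Y'); split.
- by rewrite /= hY1.
- move=> mu; rewrite in_cons => /orP[/eqP ->|/hY2 [a b c]]; first by split.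
  by split => // k'; exact: leq_trans (c k') (hu'' k').
- rewrite /= free_cons hY3 andbT; apply/negP => hin.
  have hi0m : (i0 <= m)%N.
    rewrite leqNgt; apply/negP => hh.
    by have := hu' i0; rewrite (nu_big hbox) ?(ltnW hh) // hj0.
  have hj0n : (j0 <= n)%N.
    apply: leq_trans (nu_le_n pnu hbox i0); apply: leq_trans (hu' i0).
    by rewrite hj0 leqnSn.
  have E := coord_span (X := in_tuple [seq Smu R m n mu - Smu R m n lam | mu <- Y']) hin.
  have := congr1 (fun M : MM => M (inord i0) (inord j0)) E.
  rewrite /= summxE big1 => [|i _]; last first.
    rewrite mxE.
    have /mapP [mu hmu ->] : (in_tuple [seq Smu R m n mu - Smu R m n lam | mu <- Y'])`_i
        \in [seq Smu R m n mu - Smu R m n lam | mu <- Y'].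
      exact: mem_nth (ltn_ord i).
    have [_ _ c] := hY2 mu hmu.
    have c0 := c i0; rewrite hnth eqxx in c0.
    by rewrite !mxE !inordK // c0 hlamj0 subrr mulr0.
  rewrite !mxE !inordK // hj0 ltnn hlamj0 sub0r => /eqP.
  by rewrite oppr_eq0 oner_eq0.
Qed.

Lemma dim_part : aff_dim (PASM_skew R m.+1 n.+1 lam nu) (part_size nu - part_size lam).
Proof.
split; last exact: upper.
have [Y [hY1 hY2 hY3]] := @lower (sumn nu - sumn lam) nu pnu hsub (fun k => leqnn _) erefl.
exists (Mmu R m.+1 n.+1 lam :: [seq Mmu R m.+1 n.+1 mu | mu <- Y]); split; [|split].
- by rewrite /= size_map hY1.
- move=> x; rewrite in_cons => /orP[/eqP ->|/mapP [mu hmu ->]]; apply: conv1.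
  + by exists lam; split => //; split => // k; split.
  + by have [a b c] := hY2 mu hmu; exists mu.
- rewrite /= -free_cs -!map_comp.
  have -> : [seq (csL R m n \o (fun x => x - Mmu R m.+1 n.+1 lam) \o Mmu R m.+1 n.+1) mu | mu <- Y]
          = [seq Smu R m n mu - Smu R m n lam | mu <- Y].
    apply/eq_in_map => mu hmu /=; rewrite linearB /= !csLE !csMmu //.
    by case: (hY2 mu hmu).
  exact: hY3.
Qed.
End Face2.

Unset Implicit Arguments.

Theorem theorem2 (R : realFieldType) (m n : nat) (lam nu : seq nat) :
  (1 <= m)%N -> (1 <= n)%N ->
  is_partition lam -> is_partition nu ->
  part_sub lam nu -> part_in_box n.-1 m.-1 nu ->
  is_face (PASM R m n) (PASM_skew R m n lam nu) /\
  aff_dim (PASM_skew R m n lam nu) (part_size nu - part_size lam).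
Proof.
case: m => [//|m] _; case: n => [//|n] _ plam pnu hsub hbox.
split; [exact: face_part | exact: dim_part].
Qed.
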